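(* Let $\theta\mapsto K_m(\theta)\in\mathbb{C}^{D\times D}$, $m=0,\dots,d-1$, be differentiable with $\sum_mK_m^\dagger K_m=\mathbb{1}_D$, and fix $\theta_0$. Suppose the Hamiltonian-in-Kraus-span (HKS) condition holds at $\theta_0$: $H_s:=i\sum_mK_m^\dagger\partial_\theta K_m\in\mathrm{span}\{K_i^\dagger K_j:0\le i,j<d\}$ (all evaluated at $\theta_0$). Then there is a Hermitian $h\in\mathbb{C}^{d\times d}$ such that, writing $u_\theta=e^{i\theta h}$ and defining the isometry $W_\theta=(\mathbb{1}_D\otimes u_\theta^\dagger)V_\theta$, i.e. $W_\theta=\sum_m W_m(\theta)\otimes|m\rangle$ with $V_\theta=\sum_mK_m(\theta)\otimes|m\rangle$, one has $V_\theta=(\mathbb{1}_D\otimes u_\theta)W_\theta$ for all $\theta$ and $$\sum_m W_m(\theta_0)^\dagger\,\partial_\theta W_m(\theta_0)=0.$$ Consequently, if $\rho_{ss}$ is a fixed point of the channel $\mathcal{E}(X)=\sum_mK_mXK_m^\dagger$ at $\theta_0$ (which is also the channel of $W$), the quantities $\gamma^W=\sum_m\mathrm{Tr}(W_m\rho_{ss}\dot W_m^\dagger)$ and $\beta^W_\tau=\mathrm{Tr}[\sum_m\dot W_m\mathcal{E}^\tau(\sum_nW_n\rho_{ss}\dot W_n^\dagger)W_m^\dagger]$ vanish for all $\tau\ge0$, and the quantum Fisher information at $\theta_0$ of the $T$-site state $|\Phi^W_T\rangle$ generated by $W$ equals $4T\alpha^W$ with $\alpha^W=\sum_m\mathrm{Tr}(\dot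 W_m\rho_{ss}\dot W_m^\dagger)$.
   Context: Dots denote $\partial_\theta$ at $\theta_0$. For a tensor $X=\sum_mX_m\otimes|m\rangle$ the $T$-site state is $|\Phi^X_T(\theta)\rangle=\sum_{\mathbf{m}}(\mathbb{1}_A\otimes X_{m_T}(\theta)\cdots X_{m_1}(\theta))|\xi\rangle\otimes|m_1\cdots m_T\rangle$, where $|\xi\rangle\in\mathbb{C}^D_A\otimes\mathbb{C}^D_S$ is a fixed $\theta$-independent purification of $\rho_{ss}$ (the translation-invariant MPS with boundary vectors identity and $\rho_{ss}$). Pure-state QFI is $4(\langle\dot\psi|\dot\psi\rangle-|\langle\dot\psi|\psi\rangle|^2)$. *)

(* Defs.v *)
From HB Require Import structures.
From mathcomp Require Import all_boot all_order all_algebra.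
From mathcomp Require Import all_classical all_reals all_analysis.
From mathcomp Require Import complex.
Set Implicit Arguments. Unset Strict Implicit. Unset Printing Implicit Defensive.
Import Order.TTheory GRing.Theory Num.Theory.
Import numFieldNormedType.Exports.
Local Open Scope ring_scope.
Local Open Scope complex_scope.

Section Defs.
Variable R : realType.
Local Notation C := R[i].

Definition adj m n (A : 'M[C]_(m, n)) : 'M[C]_(n, m) := (map_mx conjc A)^T.

Definition diffC (f : R -> C) (t : R) : Prop :=
  derivable (fun s => complex.Re (f s)) t 1 /\ derivable (fun s => complex.Im (f s)) t 1.

Definition dC (f : R -> C) (t : R) : C :=
  derive1 (fun s => complex.Re (f s)) t +i* derive1 (fun s => complex.Im (f s)) t.

Definition dmx m n (F : R -> 'M[C]_(m, n)) (t : R) : 'M[C]_(m, n) :=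
  \matrix_(i, j) dC (fun s => F s i j) t.

Definition mx_differentiable m n (F : R -> 'M[C]_(m, n)) : Prop :=
  forall t i j, diffC (fun s => F s i j) t.

Definition limC (u : nat -> C) : C :=
  (limn ((fun N => complex.Re (u N)) : R^nat) : R) +i* (limn ((fun N => complex.Im (u N)) : R^nat) : R).

Definition mxpow n (A : 'M[C]_n) (k : nat) : 'M[C]_n := iter k (mulmx A) 1%:M.

Definition mexp n (A : 'M[C]_n) : 'M[C]_n :=
  \matrix_(i, j) limC (fun N => (\sum_(k < N) (k`!%:R)^-1 *: mxpow A k) i j).

Definition uth d (h : 'M[C]_d) (th : R) : 'M[C]_d := mexp ((th%:C * 'i) *: h).

(* W_theta = (1_D (x) u_theta^dagger) V_theta, componentwise:
   W_n(theta) = sum_m conj(u_theta(m,n)) K_m(theta) *)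
Definition Wfam D d (K : R -> 'I_d -> 'M[C]_D) (h : 'M[C]_d) (th : R) (n : 'I_d)
  : 'M[C]_D := \sum_(m < d) (conjc (uth h th m n)) *: K th m.

Definition chan D d (K : 'I_d -> 'M[C]_D) (X : 'M[C]_D) : 'M[C]_D :=
  \sum_(m < d) K m *m X *m adj (K m).

(* X_{m_T} ... X_{m_1} for ms = [:: m_1; ...; m_T] *)
Definition mxprod D d (X : 'I_d -> 'M[C]_D) (ms : seq 'I_d) : 'M[C]_D :=
  foldl (fun acc m => X m *m acc) 1%:M ms.

(* T-site MPS state |Phi^X_T(theta)> = sum_ms (1_A (x) X_ms) |xi> (x) |ms>,
   with |xi> = sum_{a,s} xi a s |a>_A |s>_S; components indexed by (a, s', ms) *)
Definition mps_state D d T (X : R -> 'I_d -> 'M[C]_D) (xi : 'M[C]_D) (th : R)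
  (k : 'I_D * 'I_D * T.-tuple 'I_d) : C :=
  \sum_(s < D) mxprod (X th) k.2 k.1.2 s * xi k.1.1 s.

Definition qfi (I : finType) (psi : R -> I -> C) (t : R) : C :=
  4%:R * (\sum_i conjc (dC (fun s => psi s i) t) * dC (fun s => psi s i) t
          - `| \sum_i conjc (dC (fun s => psi s i) t) * psi t i | ^+ 2).

Definition redS D (xi : 'M[C]_D) : 'M[C]_D :=
  \matrix_(s, s') \sum_(a < D) xi a s * conjc (xi a s').

End Defs.

(* Main.v *)
Require Import Defs.
From HB Require Import structures.
From mathcomp Require Import all_boot all_order all_algebra.
From mathcomp Require Import all_classical all_reals all_analysis.
From mathcomp Require Import complex.
From mathcomp Require Import ring lra.
Import Order.TTheory GRing.Theory Num.Theory.
Import numFieldNormedType.Exports.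
Local Open Scope classical_set_scope.
Local Open Scope ring_scope.
Local Open Scope complex_scope.
Set Implicit Arguments. Unset Strict Implicit. Unset Printing Implicit Defensive.

Section P1.
Variable R : realType.
Local Notation C := R[i].
Implicit Types (x y : C).

Lemma cReD x y : @complex.Re R (x + y) = @complex.Re R x + @complex.Re R y.
Proof. by case: x; case: y. Qed.
Lemma cImD x y : @complex.Im R (x + y) = @complex.Im R x + @complex.Im R y.
Proof. by case: x; case: y. Qed.
Lemma cReN x : @complex.Re R (- x) = - @complex.Re R x.
Proof. by case: x. Qed.
Lemma cImN x : @complex.Im R (- x) = - @complex.Im R x.
Proof. by case: x. Qed.
Lemma cReM x y : @complex.Re R (x * y) = @complex.Re R x * @complex.Re R y - @complex.Im R x * @complex.Im R y.
Proof. by case: x; case: y. Qed.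
Lemma cImM x y : @complex.Im R (x * y) = @complex.Re R x * @complex.Im R y + @complex.Im R x * @complex.Re R y.
Proof. by case: x; case: y. Qed.
Lemma cReJ x : @complex.Re R (conjc x) = @complex.Re R x.
Proof. by case: x. Qed.
Lemma cImJ x : @complex.Im R (conjc x) = - @complex.Im R x.
Proof. by case: x. Qed.
Lemma cRe0 : @complex.Re R (0 : C) = 0. Proof. by []. Qed.
Lemma cIm0 : @complex.Im R (0 : C) = 0. Proof. by []. Qed.

Definition CD (f : R -> C) (t : R) (z : C) : Prop :=
  is_derive t (1:R) (fun s => complex.Re (f s)) (complex.Re z) /\
  is_derive t (1:R) (fun s => complex.Im (f s)) (complex.Im z).

Lemma CD_dC f t z : CD f t z -> dC f t = z.
Proof.
case=> h1 h2; rewrite /dC !derive1E.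
rewrite (@derive_val _ _ _ _ _ _ _ h1) (@derive_val _ _ _ _ _ _ _ h2).
by clear h1 h2; case: z.
Qed.

Lemma diffC_CD f t : diffC f t -> CD f t (dC f t).
Proof.
case=> h1 h2; split; apply: DeriveDef => //=; by rewrite derive1E.
Qed.

Lemma CD_unique f t z w : CD f t z -> CD f t w -> z = w.
Proof. by move=> /CD_dC <- /CD_dC <-. Qed.

Lemma CD_ext f g t z : (forall s, f s = g s) -> CD f t z -> CD g t z.
Proof. by move=> e; have -> : f = g by apply/funext. Qed.

Lemma CD_cst c t : CD (fun _ => c) t 0.
Proof. by split; apply: is_derive_cst. Qed.

Lemma CD_add f g t z w : CD f t z -> CD g t w -> CD (fun s => f s + g s) t (z + w).
Proof.
case=> f1 f2 [g1 g2]; split.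
- have -> : (fun s => complex.Re (f s + g s)) = (fun s => complex.Re (f s)) + (fun s => complex.Re (g s)).
    by apply/funext => s /=; rewrite cReD.
  by rewrite cReD; apply: is_deriveD.
- have -> : (fun s => complex.Im (f s + g s)) = (fun s => complex.Im (f s)) + (fun s => complex.Im (g s)).
    by apply/funext => s /=; rewrite cImD.
  by rewrite cImD; apply: is_deriveD.
Qed.

Lemma is_derive_fext (f g : R -> R) t a : (forall s, f s = g s) ->
  is_derive t (1:R) f a -> is_derive t (1:R) g a.
Proof. by move=> e; have -> : f = g by apply/funext. Qed.

Lemma CD_mul f g t z w : CD f t z -> CD g t w ->
  CD (fun s => f s * g s) t (z * g t + f t * w).
Proof.
case=> f1 f2 [g1 g2]; split.
- apply: is_derive_eq.
    apply: (is_derive_fext _ (is_deriveB (is_deriveM f1 g1) (is_deriveM f2 g2))).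
    by move=> s; rewrite /= cReM.
  rewrite cReD !cReM /= -![_ *: _]/(_ * _); ring.
- apply: is_derive_eq.
    apply: (is_derive_fext _ (is_deriveD (is_deriveM f1 g2) (is_deriveM f2 g1))).
    by move=> s; rewrite /= cImM.
  rewrite cImD !cImM /= -![_ *: _]/(_ * _); ring.
Qed.

Lemma CD_conj f t z : CD f t z -> CD (fun s => conjc (f s)) t (conjc z).
Proof.
case=> f1 f2; split.
- have -> : (fun s => complex.Re (conjc (f s))) = (fun s => complex.Re (f s)).
    by apply/funext => s /=; rewrite cReJ.
  by rewrite cReJ.
- have -> : (fun s => complex.Im (conjc (f s))) = - (fun s => complex.Im (f s)).
    by apply/funext => s /=; rewrite cImJ.
  by rewrite cImJ; apply: is_deriveN.
Qed.

Lemma CD_scal c f t z : CD f t z -> CD (fun s => c * f s) t (c * z).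
Proof.
move=> h; have := CD_mul (CD_cst c t) h; rewrite mul0r add0r; exact.
Qed.

Lemma CD_sum (I : Type) (r : seq I) (P : pred I) (F : I -> R -> C) (dF : I -> C) t :
  (forall i, P i -> CD (F i) t (dF i)) ->
  CD (fun s => \sum_(i <- r | P i) F i s) t (\sum_(i <- r | P i) dF i).
Proof.
move=> H; elim: r => [|a r IH].
  rewrite big_nil; apply: (@CD_ext (fun _ => 0)); last exact: CD_cst.
  by move=> s; rewrite big_nil.
rewrite big_cons; case Pa: (P a).
  apply: (@CD_ext (fun s => F a s + \sum_(i <- r | P i) F i s)).
    by move=> s; rewrite big_cons Pa.
  by apply: CD_add => //; apply: H.
apply: (@CD_ext (fun s => \sum_(i <- r | P i) F i s)) => //.
by move=> s; rewrite big_cons Pa.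
Qed.

Definition MD m n (F : R -> 'M[C]_(m,n)) t (A : 'M[C]_(m,n)) : Prop :=
  forall i j, CD (fun s => F s i j) t (A i j).

Lemma MD_dmx m n (F : R -> 'M[C]_(m,n)) t A : MD F t A -> dmx F t = A.
Proof. by move=> H; apply/matrixP => i j; rewrite mxE; apply: CD_dC. Qed.

Lemma mxdiff_MD m n (F : R -> 'M[C]_(m,n)) t : mx_differentiable F -> MD F t (dmx F t).
Proof. by move=> H i j; rewrite mxE; apply: diffC_CD. Qed.

Lemma MD_unique m n (F : R -> 'M[C]_(m,n)) t A B : MD F t A -> MD F t B -> A = B.
Proof. by move=> /MD_dmx <- /MD_dmx <-. Qed.

Lemma MD_ext m n (F G : R -> 'M[C]_(m,n)) t A : (forall s, F s = G s) -> MD F t A -> MD G t A.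
Proof. by move=> e; have -> : F = G by apply/funext. Qed.

Lemma MD_cst m n (A : 'M[C]_(m,n)) t : MD (fun _ => A) t 0.
Proof. by move=> i j; rewrite mxE; apply: CD_cst. Qed.

Lemma MD_add m n (F G : R -> 'M[C]_(m,n)) t A B :
  MD F t A -> MD G t B -> MD (fun s => F s + G s) t (A + B).
Proof.
move=> hF hG i j; rewrite mxE; apply: (@CD_ext (fun s => F s i j + G s i j)).
  by move=> s; rewrite mxE.
exact: CD_add.
Qed.

Lemma MD_sum m n (I : Type) (r : seq I) (P : pred I) (F : I -> R -> 'M[C]_(m,n)) dF t :
  (forall k, P k -> MD (F k) t (dF k)) ->
  MD (fun s => \sum_(k <- r | P k) F k s) t (\sum_(k <- r | P k) dF k).
Proof.
move=> H i j; rewrite summxE.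
apply: (@CD_ext (fun s => \sum_(k <- r | P k) F k s i j)).
  by move=> s; rewrite summxE.
by apply: CD_sum => k Pk; apply: H.
Qed.

Lemma MD_mul m n p (F : R -> 'M[C]_(m,n)) (G : R -> 'M[C]_(n,p)) t A B :
  MD F t A -> MD G t B -> MD (fun s => F s *m G s) t (A *m G t + F t *m B).
Proof.
move=> hF hG i j; rewrite !mxE.
apply: (@CD_ext (fun s => \sum_k F s i k * G s k j)).
  by move=> s; rewrite mxE.
rewrite -big_split /=; apply: CD_sum => k _; exact: CD_mul.
Qed.

Lemma MD_adj m n (F : R -> 'M[C]_(m,n)) t A :
  MD F t A -> MD (fun s => adj (F s)) t (adj A).
Proof.
move=> hF i j; rewrite /adj !mxE.
apply: (@CD_ext (fun s => conjc (F s j i))).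
  by move=> s; rewrite !mxE.
exact: CD_conj.
Qed.

Lemma MD_scale m n (f : R -> C) (F : R -> 'M[C]_(m,n)) t z A :
  CD f t z -> MD F t A -> MD (fun s => f s *: F s) t (z *: F t + f t *: A).
Proof.
move=> hf hF i j; rewrite !mxE.
apply: (@CD_ext (fun s => f s * F s i j)).
  by move=> s; rewrite mxE.
exact: CD_mul.
Qed.

End P1.

Section P3.
Variable R : realType.
Local Notation C := R[i].
Implicit Types (x y z : C).

Definition cvgC_to (u : nat -> C) (z : C) : Prop :=
  (fun n => complex.Re (u n)) @ \oo --> complex.Re z /\
  (fun n => complex.Im (u n)) @ \oo --> complex.Im z.

Lemma cvgn_fext (f g : nat -> R) (l : R) : (forall n, f n = g n) -> f @ \oo --> l -> g @ \oo --> l.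
Proof. by move=> e; have -> : f = g by apply/funext. Qed.

Lemma cvgC_limC u z : cvgC_to u z -> limC u = z.
Proof.
case=> h1 h2; rewrite /limC (cvg_lim _ h1) // (cvg_lim _ h2) //.
by clear h1 h2; case: z.
Qed.

Lemma cvgC_ext u v z : (forall n, u n = v n) -> cvgC_to u z -> cvgC_to v z.
Proof. by move=> e; have -> : u = v by apply/funext. Qed.

Lemma cvgC_cst z : cvgC_to (fun _ => z) z.
Proof. by split; apply: cvg_cst. Qed.

Lemma cvgC_add u v z w : cvgC_to u z -> cvgC_to v w -> cvgC_to (fun n => u n + v n) (z + w).
Proof.
case=> u1 u2 [v1 v2]; split.
  rewrite cReD; apply: cvgn_fext (cvgD u1 v1) => n; by rewrite /= cReD.
rewrite cImD; apply: cvgn_fext (cvgD u2 v2) => n; by rewrite /= cImD.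
Qed.

Lemma cvgC_mulc c u z : cvgC_to u z -> cvgC_to (fun n => c * u n) (c * z).
Proof.
case=> u1 u2; split.
  rewrite cReM; apply: cvgn_fext (cvgB (cvgMl_tmp (a := complex.Re c) u1) (cvgMl_tmp (a := complex.Im c) u2)) => n.
  by rewrite /= cReM.
rewrite cImM; apply: cvgn_fext (cvgD (cvgMl_tmp (a := complex.Re c) u2) (cvgMl_tmp (a := complex.Im c) u1)) => n.
by rewrite /= cImM.
Qed.

Lemma cvgC_sum (I : Type) (r : seq I) (P : pred I) (F : I -> nat -> C) (L : I -> C) :
  (forall i, P i -> cvgC_to (F i) (L i)) ->
  cvgC_to (fun n => \sum_(i <- r | P i) F i n) (\sum_(i <- r | P i) L i).
Proof.
move=> H; elim: r => [|a r IH].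
  rewrite big_nil; apply: (@cvgC_ext (fun _ => 0)); last exact: cvgC_cst.
  by move=> s; rewrite big_nil.
rewrite big_cons; case Pa: (P a).
  apply: (@cvgC_ext (fun s => F a s + \sum_(i <- r | P i) F i s)).
    by move=> s; rewrite big_cons Pa.
  by apply: cvgC_add => //; apply: H.
apply: (@cvgC_ext (fun s => \sum_(i <- r | P i) F i s)) => //.
by move=> s; rewrite big_cons Pa.
Qed.

End P3.

Section P4.
Variable R : realType.
Local Notation C := R[i].
Implicit Types (x y z : C).

Definition nC (z : C) : R := `|@complex.Re R z| + `|@complex.Im R z|.

Lemma nC_ge0 z : 0 <= nC z.
Proof. by rewrite /nC addr_ge0. Qed.

Lemma nC_Re z : `|@complex.Re R z| <= nC z.
Proof. by rewrite /nC lerDl. Qed.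
Lemma nC_Im z : `|@complex.Im R z| <= nC z.
Proof. by rewrite /nC lerDr. Qed.

Lemma nC_add x y : nC (x + y) <= nC x + nC y.
Proof.
rewrite /nC cReD cImD.
have h1 := ler_normD (complex.Re x) (complex.Re y).
have h2 := ler_normD (complex.Im x) (complex.Im y).
lra.
Qed.

Lemma nC_mul x y : nC (x * y) <= nC x * nC y.
Proof.
rewrite /nC cReM cImM.
have h1 := ler_normB (complex.Re x * complex.Re y) (complex.Im x * complex.Im y).
have h2 := ler_normD (complex.Re x * complex.Im y) (complex.Im x * complex.Re y).
rewrite !normrM in h1 h2.
rewrite mulrDl !mulrDr. lra.
Qed.

Lemma nC_sum (I : Type) (r : seq I) (P : pred I) (F : I -> C) :
  nC (\sum_(i <- r | P i) F i) <= \sum_(i <- r | P i) nC (F i).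
Proof.
elim/big_rec2: _ => [|i y1 y2 _ IH]; first by rewrite /nC /= normr0 addr0.
by apply: le_trans (nC_add _ _) _; rewrite lerD2l.
Qed.

Lemma nC_real (r : R) : nC (r%:C) = `|r|.
Proof. by rewrite /nC /= normr0 addr0. Qed.

Lemma nC_i : nC 'i = 1.
Proof. by rewrite /nC /= normr0 normr1 add0r. Qed.

Lemma nC_iX k : nC ('i ^+ k) <= 1.
Proof.
elim: k => [|k IH]; first by rewrite expr0 (_ : 1 = (1:R)%:C) // nC_real normr1.
rewrite exprS; apply: le_trans (nC_mul _ _) _; rewrite nC_i mul1r //.
Qed.

Lemma cRe_realM (r : R) z : @complex.Re R (r%:C * z) = r * @complex.Re R z.
Proof. by rewrite cReM /= mul0r subr0. Qed.
Lemma cIm_realM (r : R) z : @complex.Im R (r%:C * z) = r * @complex.Im R z.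
Proof. by rewrite cImM /= mul0r addr0. Qed.

Lemma cRe_sum (I : Type) (r : seq I) (P : pred I) (F : I -> C) :
  @complex.Re R (\sum_(i <- r | P i) F i) = \sum_(i <- r | P i) @complex.Re R (F i).
Proof. by elim/big_rec2: _ => [//|i y1 y2 _ <-]; rewrite cReD. Qed.
Lemma cIm_sum (I : Type) (r : seq I) (P : pred I) (F : I -> C) :
  @complex.Im R (\sum_(i <- r | P i) F i) = \sum_(i <- r | P i) @complex.Im R (F i).
Proof. by elim/big_rec2: _ => [//|i y1 y2 _ <-]; rewrite cImD. Qed.

Lemma natC n : (n%:R : C) = (n%:R : R)%:C.
Proof. by rewrite rmorph_nat. Qed.

Lemma cRe_natM n z : @complex.Re R (n%:R * z) = n%:R * @complex.Re R z.
Proof. by rewrite natC cRe_realM. Qed.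
Lemma cIm_natM n z : @complex.Im R (n%:R * z) = n%:R * @complex.Im R z.
Proof. by rewrite natC cIm_realM. Qed.

Definition bndM (M B : R) (c : nat -> R) := forall k, `|c k| <= M * (B ^+ k / k`!%:R).

Lemma ps_cvg M B c (x : R) : 0 <= M -> 0 <= B -> bndM M B c -> cvgn (pseries c x).
Proof.
move=> M0 B0 hc; apply: normed_cvg.
apply: (@series_le_cvg _ _ (M *: exp_coeff (B * `|x|))) => [n|n|n|].
- exact: normr_ge0.
- by rewrite /exp_coeff /= mulr_ge0 // divr_ge0 // exprn_ge0 // mulr_ge0.
- rewrite /exp_coeff /= normrM normrX (_ : (M *: _) n = M * ((B * `|x|) ^+ n / n`!%:R)) // exprMn.
  apply: le_trans (ler_wpM2r _ (hc n)) _; first by rewrite exprn_ge0.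
  by rewrite -!mulrA ler_wpM2l // [_ * `|x| ^+ n]mulrC mulrA.
- by apply: is_cvg_seriesZ; apply: is_cvg_series_exp_coeff.
Qed.

Lemma ps_diffs_bnd M B c : 0 <= M -> 0 <= B -> bndM M B c -> bndM (M * B) B (pseries_diffs c).
Proof.
move=> M0 B0 hc k; rewrite /pseries_diffs normrM normr_nat.
apply: le_trans (ler_wpM2l _ (hc k.+1)) _ => //.
rewrite factS natrM exprS.
have h1 : (k.+1%:R : R) != 0 by rewrite pnatr_eq0.
have h2 : (k`!%:R : R) != 0 by rewrite pnatr_eq0 -lt0n fact_gt0.
rewrite le_eqVlt; apply/orP; left; apply/eqP; field.
by rewrite h2 addrC natr1 h1.
Qed.

Lemma ps_derive M B c (x : R) : 0 <= M -> 0 <= B -> bndM M B c ->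
  is_derive x (1:R) (fun y : R => limn (pseries c y)) (limn (pseries (pseries_diffs c) x)).
Proof.
move=> M0 B0 hc.
have hd := ps_diffs_bnd M0 B0 hc.
have hdd := ps_diffs_bnd (mulr_ge0 M0 B0) B0 hd.
apply: (@pseries_snd_diffs _ c (`|x| + 1)).
- exact: (@ps_cvg M B c _ M0 B0 hc).
- exact: (@ps_cvg (M*B) B _ _ (mulr_ge0 M0 B0) B0 hd).
- exact: (@ps_cvg (M*B*B) B _ _ (mulr_ge0 (mulr_ge0 M0 B0) B0) B0 hdd).
- by rewrite [X in _ < X]ger0_norm ?addr_ge0 // ltrDl.
Qed.

Definition CPS (a : nat -> C) (x : R) (N : nat) : C := \sum_(k < N) (x%:C) ^+ k * a k.

Definition bndC (B : R) (a : nat -> C) := forall k, nC (a k) <= B ^+ k / k`!%:R.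

Lemma Re_CPS a (x : R) N : @complex.Re R (CPS a x N) = pseries (fun k => @complex.Re R (a k)) x N.
Proof.
rewrite /CPS /pseries /series /= cRe_sum -(big_mkord xpredT (fun k => @complex.Re R (x%:C ^+ k * a k))).
apply: eq_bigr => k _; by rewrite -rmorphXn cRe_realM mulrC.
Qed.
Lemma Im_CPS a (x : R) N : @complex.Im R (CPS a x N) = pseries (fun k => @complex.Im R (a k)) x N.
Proof.
rewrite /CPS /pseries /series /= cIm_sum -(big_mkord xpredT (fun k => @complex.Im R (x%:C ^+ k * a k))).
apply: eq_bigr => k _; by rewrite -rmorphXn cIm_realM mulrC.
Qed.

Lemma bndC_Re B a : bndC B a -> bndM 1 B (fun k => @complex.Re R (a k)).
Proof. by move=> h k; rewrite mul1r; apply: le_trans (nC_Re _) (h k). Qed.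
Lemma bndC_Im B a : bndC B a -> bndM 1 B (fun k => @complex.Im R (a k)).
Proof. by move=> h k; rewrite mul1r; apply: le_trans (nC_Im _) (h k). Qed.

Lemma CPS_cvg B a (x : R) : 0 <= B -> bndC B a -> cvgC_to (CPS a x) (limC (CPS a x)).
Proof.
move=> B0 h; split.
  have e : (fun n => @complex.Re R (CPS a x n)) = pseries (fun k => @complex.Re R (a k)) x.
    by apply/funext => n; rewrite Re_CPS.
  rewrite /limC /= e; exact: (@ps_cvg 1 B _ x ler01 B0 (bndC_Re h)).
have e : (fun n => @complex.Im R (CPS a x n)) = pseries (fun k => @complex.Im R (a k)) x.
  by apply/funext => n; rewrite Im_CPS.
rewrite /limC /= e; exact: (@ps_cvg 1 B _ x ler01 B0 (bndC_Im h)).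
Qed.

Lemma CPS_derive B a (x : R) : 0 <= B -> bndC B a ->
  CD (fun y : R => limC (CPS a y)) x (limC (CPS (fun k => k.+1%:R * a k.+1) x)).
Proof.
move=> B0 h.
have H1 := @ps_derive 1 B _ x ler01 B0 (bndC_Re h).
have H2 := @ps_derive 1 B _ x ler01 B0 (bndC_Im h).
split.
- apply: (is_derive_fext _ (is_derive_eq H1 _)).
    move=> y; rewrite /limC /=; congr (limn _); apply/funext => n; by rewrite Re_CPS.
  rewrite /limC /=; congr (limn _); apply/funext => n.
  rewrite Re_CPS; congr (pseries _ _ _); apply/funext => k.
  by rewrite /pseries_diffs cRe_natM.
- apply: (is_derive_fext _ (is_derive_eq H2 _)).
    move=> y; rewrite /limC /=; congr (limn _); apply/funext => n; by rewrite Im_CPS.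
  rewrite /limC /=; congr (limn _); apply/funext => n.
  rewrite Im_CPS; congr (pseries _ _ _); apply/funext => k.
  by rewrite /pseries_diffs cIm_natM.
Qed.

End P4.

Section P5.
Variable R : realType.
Local Notation C := R[i].

Lemma cplx_ext (x y : C) : @complex.Re R x = @complex.Re R y -> @complex.Im R x = @complex.Im R y -> x = y.
Proof. by case: x => a b; case: y => c e /= -> ->. Qed.

Lemma conj_i : conjc ('i : C) = - 'i.
Proof. by apply: cplx_ext => /=; rewrite ?oppr0. Qed.

Lemma dg_mul m n p (A : 'M[C]_(m,n)) (B : 'M[C]_(n,p)) : adj (A *m B) = adj B *m adj A.
Proof.
apply/matrixP => i j; rewrite /adj !mxE rmorph_sum; apply: eq_bigr => k _.
by rewrite !mxE rmorphM mulrC.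
Qed.

Lemma dg_scale m n (c : C) (A : 'M[C]_(m,n)) : adj (c *: A) = conjc c *: adj A.
Proof. by apply/matrixP => i j; rewrite /adj !mxE rmorphM. Qed.

Lemma dg_add m n (A B : 'M[C]_(m,n)) : adj (A + B) = adj A + adj B.
Proof. by apply/matrixP => i j; rewrite /adj !mxE rmorphD. Qed.

Lemma dg_sum m n (I : Type) (r : seq I) (P : pred I) (F : I -> 'M[C]_(m,n)) :
  adj (\sum_(k <- r | P k) F k) = \sum_(k <- r | P k) adj (F k).
Proof.
apply/matrixP => i j; rewrite /adj !mxE !summxE rmorph_sum; apply: eq_bigr => k _.
by rewrite !mxE.
Qed.

Lemma dg1 n : adj (1%:M : 'M[C]_n) = 1%:M.
Proof. by apply/matrixP => i j; rewrite /adj !mxE eq_sym rmorph_nat. Qed.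

Lemma dg0 m n : adj (0 : 'M[C]_(m,n)) = 0.
Proof. by apply/matrixP => i j; rewrite /adj !mxE rmorph0. Qed.

Lemma dgK m n (A : 'M[C]_(m,n)) : adj (adj A) = A.
Proof. by apply/matrixP => i j; rewrite /adj !mxE conjcK. Qed.

Lemma mxpowS n (h : 'M[C]_n) k : mxpow h k.+1 = h *m mxpow h k.
Proof. by []. Qed.
Lemma mxpow0 n (h : 'M[C]_n) : mxpow h 0 = 1%:M.
Proof. by []. Qed.

Lemma mxpow_scale n (c : C) (h : 'M[C]_n) k : mxpow (c *: h) k = c ^+ k *: mxpow h k.
Proof.
elim: k => [|k IH]; first by rewrite !mxpow0 expr0 scale1r.
by rewrite !mxpowS IH -scalemxAl -scalemxAr scalerA exprS.
Qed.

Variable d : nat.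
Implicit Types (h : 'M[C]_d).

Definition acoef h (i j : 'I_d) (k : nat) : C := ((k`!%:R)^-1 * 'i ^+ k) * mxpow h k i j.

Lemma uth_CPS h s i j : uth h s i j = limC (CPS (acoef h i j) s).
Proof.
rewrite /uth /mexp mxE; congr limC; apply/funext => N; rewrite summxE /CPS.
apply: eq_bigr => k _; rewrite !mxE mxpow_scale mxE exprMn /acoef; ring.
Qed.

Definition beta h : R := \sum_i \sum_j nC (h i j).

Lemma beta_ge0 h : 0 <= beta h.
Proof. by rewrite /beta sumr_ge0 // => i _; rewrite sumr_ge0 // => j _; apply: nC_ge0. Qed.

Lemma row_le_beta h i : \sum_l nC (h i l) <= beta h.
Proof.
rewrite /beta [X in _ <= X](bigD1 i) //= lerDl sumr_ge0 // => k _.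
by rewrite sumr_ge0 // => j _; apply: nC_ge0.
Qed.

Lemma mxpow_bnd h k i j : nC (mxpow h k i j) <= beta h ^+ k.
Proof.
elim: k i j => [|k IH] i j.
  rewrite mxpow0 mxE expr0; case: (i == j); rewrite ?natC ?nC_real ?normr1 ?normr0 //.
rewrite mxpowS mxE; apply: le_trans (nC_sum _ _ _) _.
apply: (@le_trans _ _ (\sum_l nC (h i l) * beta h ^+ k)).
  apply: ler_sum => l _; apply: le_trans (nC_mul _ _) _.
  by apply: ler_wpM2l; [apply: nC_ge0 | apply: IH].
by rewrite -mulr_suml exprS ler_wpM2r ?exprn_ge0 ?beta_ge0 ?row_le_beta.
Qed.

Lemma acoef_bnd h i j : bndC (beta h) (acoef h i j).
Proof.
move=> k; rewrite /acoef.
apply: le_trans (nC_mul _ _) _; rewrite mulrC.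
apply: (@ler_pM _ _ _ (nC (k`!%:R^-1 * 'i ^+ k))) => //; [exact: nC_ge0|exact: nC_ge0|exact: mxpow_bnd|].
apply: le_trans (nC_mul _ _) _.
rewrite natC -fmorphV nC_real ger0_norm ?invr_ge0 // .
by rewrite -[X in _ <= X]mulr1 ler_wpM2l ?invr_ge0 ?nC_iX.
Qed.

Lemma CPS_diffs h i j (x : R) N :
  CPS (fun k => k.+1%:R * acoef h i j k.+1) x N = \sum_l ('i * h i l) * CPS (acoef h l j) x N.
Proof.
rewrite /CPS.
under [RHS]eq_bigr do rewrite mulr_sumr.
rewrite exchange_big /=; apply: eq_bigr => k _.
rewrite /acoef mxpowS mxE !mulr_sumr; apply: eq_bigr => l _.
have hk : (k.+1%:R : C) != 0 by rewrite pnatr_eq0.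
have hf : (k`!%:R : C) != 0 by rewrite pnatr_eq0 -lt0n fact_gt0.
rewrite factS natrM invfM exprS.
field.
by rewrite hf addrC natr1 hk.
Qed.

Lemma uth_CD h (x : R) i j : CD (fun s => uth h s i j) x ((('i *: h) *m uth h x) i j).
Proof.
have B0 := beta_ge0 h.
apply: (@CD_ext _ (fun y => limC (CPS (acoef h i j) y))); first by move=> y; rewrite uth_CPS.
have -> : (('i *: h) *m uth h x) i j = limC (CPS (fun k => k.+1%:R * acoef h i j k.+1) x).
  symmetry; apply: cvgC_limC.
  apply: (@cvgC_ext _ (fun N => \sum_l ('i * h i l) * CPS (acoef h l j) x N)).
    by move=> N; rewrite CPS_diffs.
  rewrite mxE; under eq_bigr do rewrite mxE.
  apply: (@cvgC_sum R 'I_d (index_enum 'I_d) xpredT (fun l N => 'i * h i l * CPS (acoef h l j) x N) (fun l => 'i * h i l * uth h x l j)) => l _.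
  apply: cvgC_mulc; rewrite uth_CPS.
  exact: (CPS_cvg x B0 (acoef_bnd h l j)).
exact: (CPS_derive x B0 (acoef_bnd h i j)).
Qed.

Lemma uth_MD h (x : R) : MD (uth h) x (('i *: h) *m uth h x).
Proof. by move=> i j; apply: uth_CD. Qed.

Lemma CPS0 (a : nat -> C) N : (0 < N)%N -> CPS a 0 N = a 0%N.
Proof.
case: N => // N _; rewrite /CPS big_ord_recl expr0 mul1r big1 ?addr0 // => k _.
by rewrite exprS rmorph0 !mul0r.
Qed.

Lemma uth0 h : uth h 0 = 1%:M.
Proof.
apply/matrixP => i j; rewrite uth_CPS; apply: cvgC_limC.
have e : acoef h i j 0 = (1%:M : 'M[C]_d) i j by rewrite /acoef fact0 invr1 expr0 !mul1r mxpow0.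
split; apply: cvg_near_cst; exists 1%N => // n /= hn; by rewrite CPS0 // e.
Qed.

Lemma uth_unitary h : adj h = h -> forall s,
  uth h s *m adj (uth h s) = 1%:M /\ adj (uth h s) *m uth h s = 1%:M.
Proof.
move=> Hh.
have D s : MD (fun y => adj (uth h y) *m uth h y) s 0.
  have := MD_mul (MD_adj (uth_MD h s)) (uth_MD h s).
  set U := uth h s.
  have -> : adj ('i *: h *m U) *m U + adj U *m ('i *: h *m U) = 0.
    rewrite dg_mul dg_scale Hh conj_i -mulmxA -mulmxDr -mulmxDl scaleNr addNr mul0mx mulmx0.
    by [].
  by [].
have G s : adj (uth h s) *m uth h s = 1%:M.
  apply/matrixP => i j.
  have e0 : (0 : 'M[C]_d) i j = 0 by rewrite mxE.
  pose f1 := fun y => @complex.Re R ((adj (uth h y) *m uth h y) i j).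
  pose f2 := fun y => @complex.Im R ((adj (uth h y) *m uth h y) i j).
  have H1 : forall z, is_derive z (1:R) f1 0.
    by move=> z; have [H _] := D z i j; rewrite e0 in H; exact: H.
  have H2 : forall z, is_derive z (1:R) f2 0.
    by move=> z; have [_ H] := D z i j; rewrite e0 in H; exact: H.
  have E1 := is_derive_0_is_cst s 0 H1.
  have E2 := is_derive_0_is_cst s 0 H2.
  by rewrite (cplx_ext E1 E2) uth0 dg1 mulmx1.
by move=> s; split; [apply: mulmx1C|]; apply: G.
Qed.

End P5.

Section P6.
Variable R : realType.
Local Notation C := R[i].
Variables D d : nat.

Lemma sum_pair (I J : finType) (V : nmodType) (F : I * J -> V) :
  \sum_k F k = \sum_i \sum_j F (i, j).
Proof. by rewrite pair_bigA; apply: eq_bigr => -[i j]. Qed.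

Lemma sum_delta (F : 'I_d -> 'I_d -> 'M[C]_D) :
  \sum_m' \sum_m (1%:M : 'M[C]_d) m' m *: F m' m = \sum_m F m m.
Proof.
apply: eq_bigr => m' _; rewrite (bigD1 m') //= mxE eqxx scale1r big1 ?addr0 // => m ne.
by rewrite mxE eq_sym (negbTE ne) scale0r.
Qed.

Lemma gen_adj (P Q : 'M[C]_d) (A B : 'I_d -> 'M[C]_D) :
  \sum_n adj (\sum_m conjc (P m n) *: A m) *m (\sum_m conjc (Q m n) *: B m) =
  \sum_m' \sum_m (P *m adj Q) m' m *: (adj (A m') *m B m).
Proof.
transitivity (\sum_n \sum_m' \sum_m (P m' n * conjc (Q m n)) *: (adj (A m') *m B m)).
  apply: eq_bigr => n _; rewrite dg_sum mulmx_suml; apply: eq_bigr => m' _.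
  rewrite mulmx_sumr; apply: eq_bigr => m _.
  by rewrite dg_scale conjcK -scalemxAl -scalemxAr scalerA.
rewrite exchange_big /=; apply: eq_bigr => m' _.
rewrite exchange_big /=; apply: eq_bigr => m _.
by rewrite mxE scaler_suml; apply: eq_bigr => n _; rewrite /adj !mxE.
Qed.

Lemma gen_chan (P Q : 'M[C]_d) (A B : 'I_d -> 'M[C]_D) (X : 'M[C]_D) :
  \sum_n (\sum_m conjc (P m n) *: A m) *m X *m adj (\sum_m conjc (Q m n) *: B m) =
  \sum_m \sum_m' (Q *m adj P) m' m *: (A m *m X *m adj (B m')).
Proof.
transitivity (\sum_n \sum_m \sum_m' (conjc (P m n) * Q m' n) *: (A m *m X *m adj (B m'))).
  apply: eq_bigr => n _; rewrite dg_sum mulmx_suml mulmx_suml; apply: eq_bigr => m _.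
  rewrite mulmx_sumr; apply: eq_bigr => m' _.
  by rewrite dg_scale conjcK -!scalemxAl -scalemxAr scalerA.
rewrite exchange_big /=; apply: eq_bigr => m _.
rewrite exchange_big /=; apply: eq_bigr => m' _.
by rewrite mxE scaler_suml; apply: eq_bigr => n _; rewrite /adj !mxE mulrC.
Qed.

Lemma tr_sum_cyc (I : finType) (A B : I -> 'M[C]_D) (Y : 'M[C]_D) :
  \sum_t \tr (A t *m Y *m adj (B t)) = \tr ((\sum_t adj (B t) *m A t) *m Y).
Proof.
rewrite mulmx_suml raddf_sum; apply: eq_bigr => t _.
by rewrite mxtrace_mulC !mulmxA.
Qed.

Lemma foldl_mul (X : 'I_d -> 'M[C]_D) (ms : seq 'I_d) (A : 'M[C]_D) :
  foldl (fun acc m => X m *m acc) A ms = mxprod X ms *m A.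
Proof.
rewrite /mxprod; elim: ms A => [|m ms IH] A /=; first by rewrite mul1mx.
by rewrite IH [in RHS]IH mulmx1 mulmxA.
Qed.

Lemma mxprod_cons (X : 'I_d -> 'M[C]_D) m ms : mxprod X (m :: ms) = mxprod X ms *m X m.
Proof. by rewrite {1}/mxprod /= foldl_mul mulmx1. Qed.

Lemma mxprod_nil (X : 'I_d -> 'M[C]_D) : mxprod X [::] = 1%:M.
Proof. by []. Qed.

Fixpoint dprod (X dX : 'I_d -> 'M[C]_D) (ms : seq 'I_d) : 'M[C]_D :=
  match ms with
  | [::] => 0
  | m :: ms' => dprod X dX ms' *m X m + mxprod X ms' *m dX m
  end.

Lemma MD_mxprod (Xf : R -> 'I_d -> 'M[C]_D) (dX : 'I_d -> 'M[C]_D) t :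
  (forall m, MD (fun th => Xf th m) t (dX m)) ->
  forall ms, MD (fun th => mxprod (Xf th) ms) t (dprod (Xf t) dX ms).
Proof.
move=> H; elim => [|m ms IH] /=; first exact: MD_cst.
apply: (@MD_ext _ _ _ (fun th => mxprod (Xf th) ms *m Xf th m)).
  by move=> s; rewrite mxprod_cons.
exact: MD_mul.
Qed.

Lemma sum_tuple0 (V : nmodType) (F : 0.-tuple 'I_d -> V) : \sum_t F t = F [tuple].
Proof.
rewrite (eq_bigr (fun _ => F [tuple])); last by move=> t _; rewrite tuple0.
by rewrite sumr_const card_tuple expn0.
Qed.

Lemma sum_tupleS (V : nmodType) T (F : T.+1.-tuple 'I_d -> V) :
  \sum_t F t = \sum_m \sum_(t : T.-tuple 'I_d) F [tuple of m :: t].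
Proof.
rewrite pair_bigA /=.
rewrite (reindex (fun p : 'I_d * T.-tuple 'I_d => [tuple of p.1 :: p.2])) //.
exists (fun t : T.+1.-tuple 'I_d => (thead t, [tuple of behead t])).
  by move=> [m t] _ /=; rewrite theadE; congr pair; apply: val_inj.
by move=> t _ /=; rewrite [RHS]tuple_eta.
Qed.

Section Iso.
Variables (X dX : 'I_d -> 'M[C]_D).
Hypothesis Xiso : \sum_m adj (X m) *m X m = 1%:M.
Hypothesis Xkey : \sum_m adj (X m) *m dX m = 0.

Lemma Xkey' : \sum_m adj (dX m) *m X m = 0.
Proof.
transitivity (adj (\sum_m adj (X m) *m dX m)); last by rewrite Xkey dg0.
rewrite dg_sum; apply: eq_bigr => m _; by rewrite dg_mul dgK.
Qed.

Lemma L1 T : \sum_(t : T.-tuple 'I_d) adj (mxprod X t) *m mxprod X t = 1%:M.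
Proof.
elim: T => [|T IH]; first by rewrite sum_tuple0 mxprod_nil dg1 mulmx1.
rewrite sum_tupleS -[RHS]Xiso; apply: eq_bigr => m _.
transitivity (adj (X m) *m (\sum_(t : T.-tuple 'I_d) adj (mxprod X t) *m mxprod X t) *m X m); last first.
  by rewrite IH mulmx1.
rewrite mulmx_sumr mulmx_suml; apply: eq_bigr => t _.
by rewrite /= mxprod_cons dg_mul !mulmxA.
Qed.

Lemma L2 T : \sum_(t : T.-tuple 'I_d) adj (dprod X dX t) *m mxprod X t = 0.
Proof.
elim: T => [|T IH]; first by rewrite sum_tuple0 /= dg0 mul0mx.
rewrite sum_tupleS -[RHS]Xkey'.
transitivity (\sum_m (adj (X m) *m (\sum_(t : T.-tuple 'I_d) adj (dprod X dX t) *m mxprod X t) *m X m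
   + adj (dX m) *m (\sum_(t : T.-tuple 'I_d) adj (mxprod X t) *m mxprod X t) *m X m)); last first.
  by apply: eq_bigr => m _; rewrite IH L1 mulmx0 mul0mx add0r mulmx1.
apply: eq_bigr => m _.
rewrite !mulmx_sumr !mulmx_suml -big_split /=; apply: eq_bigr => t _.
by rewrite mxprod_cons dg_add !dg_mul mulmxDl !mulmxA.
Qed.

Lemma expand4 (A B rho : 'M[C]_D) :
  \sum_m (A *m X m + B *m dX m) *m rho *m adj (A *m X m + B *m dX m) =
  A *m (\sum_m X m *m rho *m adj (X m)) *m adj A +
  A *m (\sum_m X m *m rho *m adj (dX m)) *m adj B +
  B *m (\sum_m dX m *m rho *m adj (X m)) *m adj A +
  B *m (\sum_m dX m *m rho *m adj (dX m)) *m adj B.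
Proof.
rewrite !mulmx_sumr !mulmx_suml -!big_split /=; apply: eq_bigr => m _.
rewrite dg_add !dg_mul !mulmxDl !mulmxDr !mulmxA !addrA.
by rewrite -!addrA; congr (_ + _); rewrite addrC -!addrA; congr (_ + _); rewrite addrC.
Qed.

Variable rho : 'M[C]_D.
Hypothesis fix_rho : chan X rho = rho.

Definition TrC T := \sum_(t : T.-tuple 'I_d) \tr (dprod X dX t *m rho *m adj (dprod X dX t)).

Lemma L4 T : TrC T = T%:R * \sum_m \tr (dX m *m rho *m adj (dX m)).
Proof.
elim: T => [|T IH]; first by rewrite /TrC sum_tuple0 /= !mul0mx mxtrace0 mul0r.
rewrite /TrC sum_tupleS exchange_big /=.
set S1 := \sum_m X m *m rho *m adj (X m).
set S2 := \sum_m X m *m rho *m adj (dX m).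
set S3 := \sum_m dX m *m rho *m adj (X m).
set S4 := \sum_m dX m *m rho *m adj (dX m).
transitivity (\sum_(t : T.-tuple 'I_d) (\tr (dprod X dX t *m S1 *m adj (dprod X dX t))
   + \tr (dprod X dX t *m S2 *m adj (mxprod X t))
   + \tr (mxprod X t *m S3 *m adj (dprod X dX t))
   + \tr (mxprod X t *m S4 *m adj (mxprod X t)))).
  apply: eq_bigr => t _.
  rewrite -!mxtraceD /S1 /S2 /S3 /S4 -expand4 raddf_sum.
  by apply: eq_bigr.
have -> : S1 = rho by rewrite -[RHS]fix_rho.
rewrite !big_split /=.
rewrite (tr_sum_cyc (fun t : T.-tuple 'I_d => dprod X dX t) (fun t : T.-tuple 'I_d => mxprod X t)).
rewrite (tr_sum_cyc (fun t : T.-tuple 'I_d => mxprod X t) (fun t : T.-tuple 'I_d => dprod X dX t)).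
rewrite (tr_sum_cyc (fun t : T.-tuple 'I_d => mxprod X t) (fun t : T.-tuple 'I_d => mxprod X t)).
rewrite L2 L1 mul1mx.
have -> : \sum_(t : T.-tuple 'I_d) adj (mxprod X t) *m dprod X dX t = 0.
  transitivity (adj (\sum_(t : T.-tuple 'I_d) adj (dprod X dX t) *m mxprod X t)); last by rewrite L2 dg0.
  rewrite dg_sum; apply: eq_bigr => t _; by rewrite dg_mul dgK.
rewrite !mul0mx !mxtrace0 !addr0.
have -> : \sum_(i : T.-tuple 'I_d) \tr (dprod X dX i *m rho *m adj (dprod X dX i)) = TrC T by [].
rewrite IH /S4 raddf_sum -nat1r mulrDl mul1r addrC.
by [].
Qed.

End Iso.

Lemma ip (P1 P2 xi : 'M[C]_D) :
  \sum_a \sum_s' conjc (\sum_s P1 s' s * xi a s) * (\sum_s P2 s' s * xi a s)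
  = \tr (P2 *m redS xi *m adj P1).
Proof.
rewrite exchange_big /= /mxtrace; apply: eq_bigr => s' _.
rewrite !mxE.
transitivity (\sum_a \sum_s2 \sum_s conjc (P1 s' s2) * conjc (xi a s2) * (P2 s' s * xi a s)).
  apply: eq_bigr => a _; rewrite rmorph_sum mulr_suml; apply: eq_bigr => s2 _.
  by rewrite rmorphM mulr_sumr.
transitivity (\sum_s2 \sum_s \sum_a conjc (P1 s' s2) * conjc (xi a s2) * (P2 s' s * xi a s)).
  rewrite exchange_big /=; apply: eq_bigr => s2 _; by rewrite exchange_big.
apply: eq_bigr => s2 _; rewrite !mxE mulr_suml; apply: eq_bigr => s _.
rewrite !mxE mulr_sumr mulr_suml; apply: eq_bigr => a _.
ring.
Qed.

End P6.

Section P7.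
Variable R : realType.
Local Notation C := R[i].
Variables D d : nat.
Variable K0 : 'I_d -> 'M[C]_D.

Definition Gm (M : 'M[C]_d) : 'M[C]_D := \sum_i \sum_j M i j *: (adj (K0 i) *m K0 j).

Lemma Gm_adj M : adj (Gm M) = Gm (adj M).
Proof.
rewrite /Gm dg_sum exchange_big /=; apply: eq_bigr => i _.
rewrite dg_sum; apply: eq_bigr => j _.
by rewrite dg_scale dg_mul dgK /adj !mxE.
Qed.

Lemma Gm_add M N : Gm (M + N) = Gm M + Gm N.
Proof.
rewrite /Gm -big_split; apply: eq_bigr => i _; rewrite -big_split; apply: eq_bigr => j _.
by rewrite mxE scalerDl.
Qed.

Lemma Gm_scale a M : Gm (a *: M) = a *: Gm M.
Proof.
rewrite /Gm scaler_sumr; apply: eq_bigr => i _; rewrite scaler_sumr; apply: eq_bigr => j _.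
by rewrite mxE scalerA.
Qed.

End P7.

Lemma CD_eqv (R : realType) (f : R -> R[i]) t z w : CD f t z -> z = w -> CD f t w.
Proof. by move=> h <-. Qed.
Lemma MD_eqv (R : realType) m n (F : R -> 'M[R[i]]_(m,n)) t A B : MD F t A -> A = B -> MD F t B.
Proof. by move=> h <-. Qed.

Unset Implicit Arguments.

Theorem lemma2 (R : realType) (D d : nat) (K : R -> 'I_d -> 'M[R[i]]_D) (th0 : R) :
  (forall m, mx_differentiable (fun th => K th m)) ->
  (forall th, \sum_(m < d) adj (K th m) *m K th m = 1%:M) ->
  (* HKS condition at th0 *)
  (exists c : 'I_d -> 'I_d -> R[i],
     'i *: (\sum_(m < d) adj (K th0 m) *m dmx (fun th => K th m) th0)
     = \sum_(i < d) \sum_(j < d) c i j *: (adj (K th0 i) *m K th0 j)) ->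
  exists h : 'M[R[i]]_d,
    adj h = h /\
    (forall th m, K th m = \sum_(n < d) uth h th m n *: Wfam K h th n) /\
    \sum_(m < d) adj (Wfam K h th0 m) *m dmx (fun th => Wfam K h th m) th0 = 0 /\
    (forall rho : 'M[R[i]]_D,
      chan (K th0) rho = rho ->
      let W := Wfam K h th0 in
      let dW := fun m => dmx (fun th => Wfam K h th m) th0 in
      \sum_(m < d) \tr (W m *m rho *m adj (dW m)) = 0 /\
      (forall tau : nat,
         \tr (\sum_(m < d) dW m *m
                iter tau (chan (K th0)) (\sum_(n < d) W n *m rho *m adj (dW n))
                *m adj (W m)) = 0) /\
      (forall (T : nat) (xi : 'M[R[i]]_D),
         redS xi = rho ->
         qfi (@mps_state R D d T (Wfam K h) xi) th0
         = 4%:R * T%:R * \sum_(m < d) \tr (dW m *m rho *m adj (dW m)))).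
Proof.
move=> HK Hiso [c Hc].
pose K0 := fun m => K th0 m.
pose dK := fun m => dmx (fun th => K th m) th0.
have MDK : forall m, MD (fun th => K th m) th0 (dK m) by move=> m; exact: mxdiff_MD.
pose S := \sum_m adj (K0 m) *m dK m.
have SadjN : adj S = - S.
  have MDs := @MD_sum R D D 'I_d (index_enum 'I_d) xpredT
     (fun m th => adj (K th m) *m K th m) _ th0 (fun m _ => MD_mul (MD_adj (MDK m)) (MDK m)).
  have MD1 : MD (fun th => \sum_m adj (K th m) *m K th m) th0 0.
    apply: (MD_ext (F := fun _ => 1%:M)); last exact: MD_cst.
    by move=> s; rewrite Hiso.
  have Z := MD_unique MDs MD1.
  rewrite big_split /= in Z.
  have -> : adj S = \sum_m adj (dK m) *m K th0 m.
    by rewrite /S dg_sum; apply: eq_bigr => m _; rewrite dg_mul dgK.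
  by apply/eqP; rewrite -addr_eq0; apply/eqP.
pose cm := \matrix_(i, j) c i j.
pose Hs := 'i *: S.
have HsG : Hs = Gm K0 cm.
  by rewrite /Hs Hc /Gm; apply: eq_bigr => i _; apply: eq_bigr => j _; rewrite mxE.
have Hsadj : adj Hs = Hs.
  by rewrite /Hs dg_scale SadjN conj_i scalerN scaleNr opprK.
have HsG' : Hs = Gm K0 (adj cm) by rewrite -Gm_adj -HsG Hsadj.
pose h := (- (2%:R^-1 : R[i])) *: (cm + adj cm).
have conj_half : conjc (- (2%:R^-1 : R[i])) = - (2%:R^-1).
  by rewrite rmorphN fmorphV rmorph_nat.
have Hh : adj h = h.
  by rewrite /h dg_scale conj_half dg_add dgK addrC.
have Gh : Gm K0 h = - Hs.
  rewrite /h Gm_scale Gm_add -HsG -HsG'.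
  have h2 : (2%:R : R[i]) != 0 by rewrite pnatr_eq0.
  have e : - (2%:R^-1 : R[i]) + - 2%:R^-1 = -1.
    by field.
  set a := - _. by rewrite -[Hs + Hs]mulr2n -scalerMnr scalerMnl mulr2n e scaleN1r.
exists h; split; first exact: Hh.
have Hu := uth_unitary Hh.
pose U0 := uth h th0.
pose du := ('i *: h) *m U0.
pose W0 := Wfam K h th0.
pose dW' := fun n => \sum_m (conjc (du m n) *: K0 m + conjc (U0 m n) *: dK m).
have MDW : forall n, MD (fun th => Wfam K h th n) th0 (dW' n).
  move=> n; apply: (@MD_sum R D D 'I_d (index_enum 'I_d) xpredT
     (fun m th => conjc (uth h th m n) *: K th m)).
  by move=> m _; apply: MD_scale; [apply: CD_conj; apply: uth_CD | apply: MDK].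
have dWE : forall n, dmx (fun th => Wfam K h th n) th0 = dW' n.
  by move=> n; apply: MD_dmx.
have Wiso : \sum_n adj (W0 n) *m W0 n = 1%:M.
  rewrite /W0 /Wfam gen_adj (proj1 (Hu th0)) sum_delta; exact: Hiso.
have Wkey : \sum_n adj (W0 n) *m dW' n = 0.
  transitivity (\sum_n adj (W0 n) *m (\sum_m conjc (du m n) *: K0 m)
             + \sum_n adj (W0 n) *m (\sum_m conjc (U0 m n) *: dK m)).
    by rewrite -big_split; apply: eq_bigr => n _; rewrite /dW' big_split mulmxDr.
  rewrite /W0 /Wfam !gen_adj (proj1 (Hu th0)) sum_delta.
  have -> : U0 *m adj du = - 'i *: h.
    by rewrite /du dg_mul dg_scale Hh conj_i mulmxA (proj1 (Hu th0)) mul1mx.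
  have -> : \sum_m' \sum_m (- 'i *: h) m' m *: (adj (K th0 m') *m K th0 m) = Gm K0 (- 'i *: h).
    by [].
  rewrite Gm_scale Gh /Hs scalerN scaleNr opprK scalerA.
  have -> : ('i * 'i : R[i]) = -1 by apply: cplx_ext => /=; rewrite ?mul0r ?mul1r ?subr0 ?add0r ?oppr0 //; lra.
  by rewrite scaleN1r addNr.
split.
  move=> th m; rewrite /Wfam.
  transitivity (\sum_m' (uth h th *m adj (uth h th)) m m' *: K th m').
    by rewrite (proj1 (Hu th)) (bigD1 m) //= mxE eqxx scale1r big1 ?addr0 // => m' ne;
       rewrite mxE eq_sym (negbTE ne) scale0r.
  transitivity (\sum_n \sum_m' (uth h th m n * conjc (uth h th m' n)) *: K th m'); last first.
    by apply: eq_bigr => n _; rewrite scaler_sumr; apply: eq_bigr => m' _; rewrite scalerA.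
  rewrite exchange_big /=; apply: eq_bigr => m' _.
  by rewrite mxE scaler_suml; apply: eq_bigr => n _; rewrite /adj !mxE.
split.
  by rewrite (eq_bigr (fun n => adj (W0 n) *m dW' n)) // => n _; rewrite dWE.
move=> rho Hrho W dW.
have dWE' : forall n, dW n = dW' n by move=> n; rewrite /dW dWE.
have Wkey' : \sum_n adj (W n) *m dW n = 0.
  by rewrite (eq_bigr (fun n => adj (W0 n) *m dW' n)) // => n _; rewrite dWE'.
have Wiso' : \sum_n adj (W n) *m W n = 1%:M by exact: Wiso.
have chanW : forall X, chan W X = chan (K th0) X.
  move=> X; rewrite /chan /W /Wfam gen_chan (proj1 (Hu th0)) exchange_big /=.
  by rewrite (sum_delta (fun m' m => K th0 m *m X *m adj (K th0 m'))).
have Wfix : chan W rho = rho by rewrite chanW.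
split.
  rewrite (tr_sum_cyc W dW rho) (Xkey' Wkey') mul0mx mxtrace0 //.
split.
  move=> tau; rewrite raddf_sum /= (tr_sum_cyc dW W) Wkey' mul0mx mxtrace0 //.
move=> T xi Hxi.
pose P := fun (ms : seq 'I_d) => mxprod W ms.
pose dP := fun (ms : seq 'I_d) => dprod W dW ms.
have MDP : forall ms, MD (fun th => mxprod (Wfam K h th) ms) th0 (dP ms).
  apply: MD_mxprod => m; rewrite dWE'; exact: MDW.
have dpsi : forall k, dC (fun s => @mps_state R D d T (Wfam K h) xi s k) th0
                     = \sum_s dP k.2 k.1.2 s * xi k.1.1 s.
  move=> k; apply: CD_dC; rewrite /mps_state.
  apply: CD_sum => s _; apply: CD_eqv; first exact: (CD_mul (MDP k.2 k.1.2 s) (CD_cst (xi k.1.1 s) th0)).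
  by rewrite mulr0 addr0.
have Q1 : \sum_k conjc (dC (fun s => @mps_state R D d T (Wfam K h) xi s k) th0)
             * dC (fun s => @mps_state R D d T (Wfam K h) xi s k) th0
          = TrC W dW rho T.
  rewrite (eq_bigr (fun k : 'I_D * 'I_D * T.-tuple 'I_d => conjc (\sum_s dP k.2 k.1.2 s * xi k.1.1 s) * (\sum_s dP k.2 k.1.2 s * xi k.1.1 s))); last by move=> k _; rewrite dpsi.
  rewrite sum_pair /TrC exchange_big /=; apply: eq_bigr => t _.
  rewrite sum_pair -Hxi -ip; by [].
have Q2 : \sum_k conjc (dC (fun s => @mps_state R D d T (Wfam K h) xi s k) th0)
             * @mps_state R D d T (Wfam K h) xi th0 k = 0.
  rewrite (eq_bigr (fun k : 'I_D * 'I_D * T.-tuple 'I_d => conjc (\sum_s dP k.2 k.1.2 s * xi k.1.1 s) * (\sum_s P k.2 k.1.2 s * xi k.1.1 s))); last by move=> k _; rewrite dpsi.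
  rewrite sum_pair exchange_big /=.
  rewrite (eq_bigr (fun t : T.-tuple 'I_d => \tr (P t *m rho *m adj (dP t)))); last first.
    by move=> t _; rewrite sum_pair -Hxi -ip.
  rewrite (tr_sum_cyc (fun t : T.-tuple 'I_d => P t) (fun t : T.-tuple 'I_d => dP t)).
  by rewrite (L2 Wiso' Wkey') mul0mx mxtrace0.
rewrite /qfi Q1 Q2 (L4 Wiso' Wkey' Wfix) normr0 expr0n /= subr0 mulrA.
by [].
Qed.
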